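(* Let $E_1,E_2$ be isogenous complex elliptic curves with complex multiplication, $\mathrm{End}_{\mathbb Q}(E_i)=\mathbb Q(\sqrt d)$ with $d<0$ square-free, and $\mathrm{End}(E_i)=\mathbb Z+f_i\omega\mathbb Z$ with integers $f_1,f_2\ge1$, where $\omega=\sqrt d$ if $d\equiv2,3\pmod4$ and $\omega=\tfrac12(1+\sqrt d)$ if $d\equiv1\pmod4$. Let $X=E_1\times E_2$. Then the discriminant of $\mathrm{NS}(X)$ is $$\Delta(X)=-4\,\mathrm{lcm}(f_1,f_2)^2\,(\mathrm{Im}\,\omega)^2.$$
   Context: The discriminant of $\mathrm{NS}(X)$ is the determinant of the Gram matrix of the intersection form with respect to a lattice basis of the Néron–Severi lattice. *)

(* Defs.v *)
(* Complex elliptic curves are modelled analytically as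
   complex tori C/(Z + tau Z) with Im tau > 0, over algC (CM curves have
   algebraic tau, so nothing is lost).  NS of the abelian surface
   X = E1 x E2 = C^2 / Lambda is given by the Appell--Humbert description:
   alternating integral forms A on Lambda that are the imaginary part of a
   Hermitian form on C^2; the intersection form is the cup product,
   (L.M) = B(A_L, A_M), where B is the polarisation of 2*Pfaffian
   computed in the positively oriented lattice basis
   (1,0), (tau1,0), (0,1), (0,tau2). *)
From HB Require Import structures.
From mathcomp Require Import all_boot all_order all_algebra all_field.
Set Implicit Arguments. Unset Strict Implicit. Unset Printing Implicit Defensive.
Import Order.TTheory GRing.Theory Num.Theory.
Local Open Scope ring_scope.

Definition squarefree_int (d : int) : Prop :=
  forall p : nat, prime p -> ~~ (p ^ 2 %| `|d|)%N.

Definition omega_of (d : int) : algC :=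
  if (d %% 4)%Z == 1 then (1 + sqrtC (d%:~R)) / 2 else sqrtC (d%:~R).

Definition inLat (tau z : algC) : Prop :=
  exists a b : int, z = a%:~R + b%:~R * tau.

Definition isEnd (tau alpha : algC) : Prop :=
  inLat tau alpha /\ inLat tau (alpha * tau).

Definition isogenous (t1 t2 : algC) : Prop :=
  exists alpha : algC, alpha != 0 /\ inLat t2 alpha /\ inLat t2 (alpha * t1).

Definition latvec (t1 t2 : algC) (i : 'I_4) : algC * algC :=
  match val i with
  | 0 => (1, 0)
  | 1 => (t1, 0)
  | 2 => (0, 1)
  | _ => (0, t2)
  end.

Definition hermitian (M : 'M[algC]_2) : Prop :=
  forall i j, M j i = (M i j)^*.

Definition hform (M : 'M[algC]_2) (x y : algC * algC) : algC :=
  x.1 * M 0 0 * (y.1)^* + x.1 * M 0 1 * (y.2)^*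
  + x.2 * M 1 0 * (y.1)^* + x.2 * M 1 1 * (y.2)^*.

Definition inNS (t1 t2 : algC) (A : 'M[int]_4) : Prop :=
  exists M : 'M[algC]_2, hermitian M /\
    forall i j, 'Im (hform M (latvec t1 t2 i) (latvec t1 t2 j)) = (A i j)%:~R.

Definition o0 : 'I_4 := inord 0.
Definition o1 : 'I_4 := inord 1.
Definition o2 : 'I_4 := inord 2.
Definition o3 : 'I_4 := inord 3.

(* intersection form: (L.M) = integral of c1(L) /\ c1(M); (L.L) = 2 Pf *)
Definition intersect (A B : 'M[int]_4) : int :=
  A o0 o1 * B o2 o3 + B o0 o1 * A o2 o3
  - A o0 o2 * B o1 o3 - B o0 o2 * A o1 o3
  + A o0 o3 * B o1 o2 + B o0 o3 * A o1 o2.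

Definition NS_basis (t1 t2 : algC) (n : nat) (b : 'I_n -> 'M[int]_4) : Prop :=
  [/\ forall i, inNS t1 t2 (b i),
      forall A, inNS t1 t2 A -> exists c : 'I_n -> int, A = \sum_(i < n) c i *: b i
    & forall c : 'I_n -> int, \sum_(i < n) c i *: b i = 0 -> forall i, c i = 0].

Definition gram (n : nat) (b : 'I_n -> 'M[int]_4) : 'M[int]_n :=
  \matrix_(i, j) intersect (b i) (b j).

(* Main.v *)
Require Import Defs.
From HB Require Import structures.
From mathcomp Require Import all_boot all_order all_algebra all_field.
From mathcomp Require Import zify ring lra.
Import Order.TTheory GRing.Theory Num.Theory.
Local Open Scope ring_scope.
Set Implicit Arguments. Unset Strict Implicit. Unset Printing Implicit Defensive.
Section Gen.
Variables t1 t2 : algC.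
Local Notation NSb := (NS_basis t1 t2).

Lemma intersect_addl (A B C : 'M[int]_4) :
  intersect (A + B) C = intersect A C + intersect B C.
Proof. rewrite /intersect !mxE; ring. Qed.
Lemma intersect_scalel (c : int) (A C : 'M[int]_4) :
  intersect (c *: A) C = c * intersect A C.
Proof. rewrite /intersect !mxE; ring. Qed.
Lemma intersect0l (C : 'M[int]_4) : intersect 0 C = 0.
Proof. rewrite /intersect !mxE; ring. Qed.
Lemma intersectC (A B : 'M[int]_4) : intersect A B = intersect B A.
Proof. rewrite /intersect; ring. Qed.

Lemma intersect_suml k (c : 'I_k -> int) (B : 'I_k -> 'M[int]_4) C :
  intersect (\sum_(l < k) c l *: B l) C = \sum_(l < k) c l * intersect (B l) C.
Proof.
elim/big_rec2: _ => [|l y1 y2 _ <-]; first by rewrite intersect0l.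
by rewrite intersect_addl intersect_scalel.
Qed.

Lemma coordsP n k (b : 'I_n -> 'M[int]_4) (b' : 'I_k -> 'M[int]_4) :
  NSb b' -> (forall i, inNS t1 t2 (b i)) ->
  exists P : 'M[int]_(n, k), forall i, b i = \sum_(l < k) P i l *: b' l.
Proof.
move=> [_ hsp _] hb.
have: forall i : 'I_n, exists c : 'I_k -> int, b i = \sum_(l < k) c l *: b' l.
  by move=> i; apply: hsp.
case/(@fin_all_exists _ (fun _ => 'I_k -> int)) => u hu.
by exists (\matrix_(i, l) u i l) => i; rewrite hu; apply: eq_bigr => l _; rewrite mxE.
Qed.

Lemma comp_sum n k (b : 'I_n -> 'M[int]_4) (P : 'M[int]_(n, k)) (Q : 'M[int]_(k, n)) i :
  \sum_(l < k) P i l *: (\sum_(j < n) Q l j *: b j) =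
  \sum_(j < n) (P *m Q) i j *: b j.
Proof.
under eq_bigr do rewrite scaler_sumr.
rewrite exchange_big /=; apply: eq_bigr => j _.
by rewrite mxE scaler_suml; apply: eq_bigr => l _; rewrite scalerA.
Qed.

Lemma sum_delta n (b : 'I_n -> 'M[int]_4) i :
  \sum_(j < n) (1%:M : 'M[int]_n) i j *: b j = b i.
Proof.
rewrite (bigD1 i) //= big1 ?addr0; first by rewrite mxE eqxx scale1r.
by move=> j /negbTE ji; rewrite mxE eq_sym ji scale0r.
Qed.

Lemma indepE n (b : 'I_n -> 'M[int]_4) (c c' : 'I_n -> int) : NSb b ->
  \sum_(j < n) c j *: b j = \sum_(j < n) c' j *: b j -> forall j, c j = c' j.
Proof.
move=> [_ _ hind] he j; apply/eqP; rewrite -subr_eq0; apply/eqP.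
apply: (hind (fun j => c j - c' j)).
under eq_bigr do rewrite scalerBl.
by rewrite sumrB he subrr.
Qed.

Lemma PQ1 n k (b : 'I_n -> 'M[int]_4) (b' : 'I_k -> 'M[int]_4) (P : 'M[int]_(n,k)) (Q : 'M[int]_(k,n)) :
  NSb b -> (forall i, b i = \sum_(l < k) P i l *: b' l) ->
  (forall i, b' i = \sum_(l < n) Q i l *: b l) -> P *m Q = 1%:M.
Proof.
move=> hb hP hQ; apply/matrixP => i j.
apply: (@indepE n b (fun j => (P *m Q) i j) (fun j => (1%:M : 'M_n) i j) hb).
rewrite -comp_sum sum_delta hP.
by apply: eq_bigr => l _; rewrite hQ.
Qed.

Lemma rank_le n k (P : 'M[int]_(n, k)) Q : P *m Q = 1%:M -> (n <= k)%N.
Proof.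
move=> e.
have : map_mx (intr : int -> algC) (P *m Q) = 1%:M.
  by rewrite e; apply/matrixP => i j; rewrite !mxE; case: (i == j); rewrite ?mulr1n ?mulr0n.
rewrite map_mxM => e2.
have := mxrankM_maxl (map_mx (intr : int -> algC) P) (map_mx intr Q).
by rewrite e2 mxrank1 => /leq_trans; apply; apply: rank_leq_col.
Qed.

Lemma basis_size n k (b : 'I_n -> 'M[int]_4) (b' : 'I_k -> 'M[int]_4) :
  NSb b -> NSb b' -> n = k.
Proof.
move=> hb hb'.
have [P hP] := coordsP hb' (let: And3 h _ _ := hb in h).
have [Q hQ] := coordsP hb (let: And3 h _ _ := hb' in h).
apply/eqP; rewrite eqn_leq (rank_le (PQ1 hb hP hQ)) (rank_le (PQ1 hb' hQ hP)) //.
Qed.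

Lemma gram_change n (b b' : 'I_n -> 'M[int]_4) :
  NSb b -> NSb b' -> \det (gram b) = \det (gram b').
Proof.
move=> hb hb'.
have [P hP] := coordsP hb' (let: And3 h _ _ := hb in h).
have [Q hQ] := coordsP hb (let: And3 h _ _ := hb' in h).
have e := PQ1 hb hP hQ.
have eg : gram b = P *m gram b' *m P^T.
  apply/matrixP => i j; rewrite !mxE hP intersect_suml.
  under eq_bigr do rewrite intersectC hP intersect_suml mulr_sumr.
  rewrite exchange_big /=; apply: eq_bigr => r _; rewrite !mxE mulr_suml.
  by apply: eq_bigr => l _; rewrite !mxE intersectC; ring.
have dPQ : \det P * \det Q = 1 by rewrite -det_mulmx e det1.
have dP2 : \det P * \det P = 1.
  move: (\det P) (\det Q) dPQ => x y e1.
  have h : (`|x| * `|y| = 1)%N by rewrite -abszM e1.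
  move/eqP: h; rewrite muln_eq1 => /andP [/eqP hx _].
  by case: x hx {e1} => [[|[|k]]|[|k]] //= _.
rewrite eg !det_mulmx det_tr mulrC mulrA dP2 mul1r //.
Qed.
End Gen.
Section HNF.
Variable H : int -> int -> bool.
Hypothesis Hsub : forall x y x' y', H x y -> H x' y' -> H (x - x') (y - y').

Lemma H_N x y : H x y -> H (- x) (- y).
Proof. move=> h; have := Hsub h h; rewrite !subrr => h0; have := Hsub h0 h; by rewrite !sub0r. Qed.
Lemma H_D x y x' y' : H x y -> H x' y' -> H (x + x') (y + y').
Proof. by move=> h h'; have := Hsub h (H_N h'); rewrite !opprK. Qed.
Lemma H_Z (k : int) x y : H x y -> H (k * x) (k * y).
Proof.
move=> h.
have hn (j : nat) : H (j%:Z * x) (j%:Z * y).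
  elim: j => [|j IH]; first by have := Hsub h h; rewrite !subrr !mul0r.
  by have := H_D IH h; rewrite -[j.+1]addn1 PoszD !mulrDl !mul1r.
case: k => [j|j]; first exact: hn.
by rewrite NegzE !mulNr; apply: H_N; apply: hn.
Qed.

Lemma hnf (m : int) : m != 0 -> H m 0 -> H 0 m ->
  exists u1 u2 v1 v2, [/\ H u1 u2, H v1 v2 &
    forall x y, H x y -> exists a c, x = a * u1 + c * v1 /\ y = a * u2 + c * v2].
Proof.
move=> m0 hm0 h0m.
pose M := `|m|%N.
have hM : (0 < M)%N by rewrite absz_gt0.
have HM0 : H M%:Z 0 by have := H_Z (Num.sg m) hm0; rewrite mulr0 -normrEsg abszE.
have H0M : H 0 M%:Z by have := H_Z (Num.sg m) h0m; rewrite mulr0 -normrEsg abszE.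
have red x y : H x y -> H (x %% M%:Z)%Z y.
  move=> h; have := Hsub h (H_Z (x %/ M%:Z)%Z HM0); rewrite mulr0 subr0.
  by rewrite /modz.
pose Py k := (0 < k)%N && [exists x : 'I_M, H (nat_of_ord x)%:Z k%:Z].
have exPy : exists k, Py k.
  exists M; rewrite /Py hM /=; apply/existsP; exists (Ordinal hM); exact: H0M.
have [y0 /andP [y0pos /existsP [x0 Hx0]] miny] := ex_minnP exPy.
pose Px k := (0 < k)%N && H k%:Z 0.
have exPx : exists k, Px k by exists M; rewrite /Px hM HM0.
have [x1 /andP [x1pos Hx1] minx] := ex_minnP exPx.
exists x1%:Z, 0, (nat_of_ord x0)%:Z, y0%:Z; split => // x y h.
pose q := (y %/ y0%:Z)%Z; pose r := (y %% y0%:Z)%Z.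
have y0nz : y0%:Z != 0 by rewrite eqz_nat -lt0n.
have Hr : H (x - q * x0%:Z) r.
  have := Hsub h (H_Z q Hx0); suff -> : y - q * y0%:Z = r by [].
  by rewrite /r /modz.
have r0 : r = 0.
  have rge : 0 <= r by apply: modz_ge0.
  have rlt : r < y0%:Z by apply: ltz_pmod; rewrite ltz_nat.
  move: Hr; rewrite -/r; case: r rge rlt => [[|rn]|rn] // _ rlt Hr.
  have := red _ _ Hr.
  have mge : 0 <= ((x - q * x0%:Z) %% M%:Z)%Z by apply: modz_ge0; rewrite eqz_nat -lt0n.
  have mlt : ((x - q * x0%:Z) %% M%:Z)%Z < M%:Z by apply: ltz_pmod; rewrite ltz_nat.
  case: ((x - q * x0%:Z) %% M%:Z)%Z mge mlt => [xn|xn] // _ xlt Hxr.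
  have : Py rn.+1 by rewrite /Py /=; apply/existsP; exists (Ordinal xlt).
  by move/miny; rewrite leqNgt; move: rlt; rewrite ltz_nat => ->.
have ey : y = q * y0%:Z by rewrite {1}(divz_eq y y0%:Z) -/r r0 addr0.
have Hz : H (x - q * x0%:Z) 0 by rewrite -r0.
pose z := x - q * x0%:Z.
pose q' := (z %/ x1%:Z)%Z; pose r' := (z %% x1%:Z)%Z.
have Hr' : H r' 0.
  have := Hsub Hz (H_Z q' Hx1); rewrite mulr0 subr0.
  by rewrite /r' /modz.
have r'0 : r' = 0.
  have rge : 0 <= r' by apply: modz_ge0; rewrite eqz_nat -lt0n.
  have rlt : r' < x1%:Z by apply: ltz_pmod; rewrite ltz_nat.
  move: Hr'; case: r' rge rlt => [[|rn]|rn] // _ rlt Hr2.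
  have : Px rn.+1 by rewrite /Px.
  by move/minx; rewrite leqNgt; move: rlt; rewrite ltz_nat => ->.
exists q', q; split; last by rewrite mulr0 add0r.
have := divz_eq z x1%:Z; rewrite -/q' -/r' r'0 addr0 /z => e.
by rewrite -e subrK.
Qed.
End HNF.
Lemma dvdzD' (d a b : int) : (d %| a)%Z -> (d %| b)%Z -> (d %| a + b)%Z.
Proof. by move/dvdzP=> [x ->] /dvdzP [y ->]; apply/dvdzP; exists (x + y); ring. Qed.
Lemma dvdzB' (d a b : int) : (d %| a)%Z -> (d %| b)%Z -> (d %| a - b)%Z.
Proof. by move/dvdzP=> [x ->] /dvdzP [y ->]; apply/dvdzP; exists (x - y); ring. Qed.
Lemma dvdzN' (d a : int) : (d %| a)%Z -> (d %| - a)%Z.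
Proof. by move/dvdzP=> [x ->]; apply/dvdzP; exists (- x); ring. Qed.
Lemma dvdzNr (d a : int) : (d %| - a)%Z = (d %| a)%Z.
Proof. by rewrite !dvdzE abszN. Qed.
Lemma Euclidz (p : nat) (a b : int) : prime p ->
  (p%:Z %| a * b)%Z -> (p%:Z %| a)%Z || (p%:Z %| b)%Z.
Proof. by move=> pp; rewrite !dvdzE abszM Euclid_dvdM. Qed.

Lemma dvd_gcdM (k X a b : int) : (k %| X * a)%Z -> (k %| X * b)%Z -> (k %| X * gcdz a b)%Z.
Proof.
move=> ha hb; have [u [v e]] := Bezoutz a b.
rewrite -e mulrDr !mulrA ![X * _]mulrC -!mulrA; apply: dvdzD'; exact: dvdz_mull.
Qed.

Lemma gcd_one (G : int) : 0 <= G ->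
  (forall p : nat, prime p -> (p%:Z %| G)%Z -> False) -> G = 1.
Proof.
case: G => [g|g] // _ h.
case: g h => [|[|g]] h //.
  by exfalso; apply: (h 2%N) => //.
exfalso; apply: (h (pdiv g.+2)); first by apply: pdiv_prime.
by rewrite dvdzE /=; apply: pdiv_dvd.
Qed.

Lemma dvd_gcd6 (k X e1 e2 e3 e4 e5 e6 : int) :
  (forall p : nat, prime p -> (p%:Z %| e1)%Z -> (p%:Z %| e2)%Z -> (p%:Z %| e3)%Z ->
     (p%:Z %| e4)%Z -> (p%:Z %| e5)%Z -> (p%:Z %| e6)%Z -> False) ->
  (k %| X * e1)%Z -> (k %| X * e2)%Z -> (k %| X * e3)%Z ->
  (k %| X * e4)%Z -> (k %| X * e5)%Z -> (k %| X * e6)%Z -> (k %| X)%Z.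
Proof.
move=> hp h1 h2 h3 h4 h5 h6.
set G := gcdz e1 (gcdz e2 (gcdz e3 (gcdz e4 (gcdz e5 e6)))).
have : (k %| X * G)%Z by do !apply: dvd_gcdM.
suff -> : G = 1 by rewrite mulr1.
apply: gcd_one; first by [].
move=> p pp hG; apply: (hp p pp); rewrite /G in hG;
  repeat (move: hG; rewrite dvdz_gcd => /andP [? hG]); done.
Qed.
Section Omega.
Variables (w : algC) (s n0 : int).
Hypothesis hw2 : w ^+ 2 = s%:~R * w + n0%:~R.
Hypothesis hwc : w^* = s%:~R - w.
Hypothesis hdK : s ^+ 2 + 4 * n0 != 0.

Lemma lin_indep (x y : int) : x%:~R + y%:~R * w = 0 -> x = 0 /\ y = 0.
Proof.
move=> e.
have ec : x%:~R + y%:~R * (s%:~R - w) = 0 :> algC.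
  by rewrite -hwc -(rmorph_int (@Num.conj algC) x) -(rmorph_int (@Num.conj algC) y) -rmorphM -rmorphD e rmorph0.
have ey : y = 0.
  apply/eqP; apply: contraNT hdK => y0.
  have : y%:~R * (2%:R * w - s%:~R) = 0 :> algC.
    have -> : y%:~R * (2%:R * w - s%:~R) = (x%:~R + y%:~R * w) - (x%:~R + y%:~R * (s%:~R - w)) :> algC by ring.
    by rewrite e ec subrr.
  move/eqP; rewrite mulf_eq0 intr_eq0 (negPf y0) /= => /eqP h.
  have : (s ^+ 2 + 4 * n0)%:~R = (2%:R * w - s%:~R) ^+ 2 :> algC.
    rewrite rmorphD rmorphM /= !rmorphXn /=.
    have -> : (2%:R * w - s%:~R) ^+ 2 = 4%:R * w ^+ 2 - 4%:R * s%:~R * w + s%:~R ^+ 2 :> algC by ring.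
    rewrite hw2; ring.
  by rewrite h expr0n /= => /eqP; rewrite intr_eq0.
split => //; move: e; rewrite ey mul0r addr0 => /eqP; rewrite intr_eq0 => /eqP //.
Qed.

Lemma curve_data (f : nat) (t : algC) : (0 < f)%N ->
  (forall alpha, isEnd t alpha <-> exists a b : int, alpha = a%:~R + b%:~R * f%:R * w) ->
  exists a b c : int, [/\ b%:~R * t = f%:R * w - a%:~R, b != 0,
    b * c = a ^+ 2 - a * f%:Z * s - f%:Z ^+ 2 * n0 &
    forall p : nat, prime p -> (p%:Z %| b)%Z -> (p%:Z %| 2 * a - f%:Z * s)%Z -> (p%:Z %| c)%Z -> False].
Proof.
move=> fpos hEnd.
have [[a [b eab]] [a' [b' eab']]] : isEnd t (f%:R * w).
  by apply/hEnd; exists 0, 1; rewrite mul1r add0r.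
have eb : b%:~R * t = f%:R * w - a%:~R by rewrite eab; ring.
have fnz : f%:Z != 0 by rewrite eqz_nat -lt0n.
have bnz : b != 0.
  apply/eqP => b0; move: eab; rewrite b0 mul0r addr0 => e.
  have e0 : (- a)%:~R + (f%:Z)%:~R * w = 0 :> algC by rewrite rmorphN /= e; ring.
  have [_ /eqP] := lin_indep e0.
  by rewrite (negPf fnz).
have key : ((f%:Z ^+ 2 * n0 - a' * b + b' * a)%:~R +
            (f%:Z ^+ 2 * s - a * f%:Z - b' * f%:Z)%:~R * w : algC) = 0.
  have e1 : f%:R * w * (b%:~R * t) = a'%:~R * b%:~R + b'%:~R * (b%:~R * t) :> algC.
    by rewrite mulrCA eab'; ring.
  rewrite eb in e1.
  have -> : ((f%:Z ^+ 2 * n0 - a' * b + b' * a)%:~R +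
            (f%:Z ^+ 2 * s - a * f%:Z - b' * f%:Z)%:~R * w : algC) =
     f%:R ^+ 2 * (s%:~R * w + n0%:~R - w ^+ 2) +
     (f%:R * w * (f%:R * w - a%:~R) - (a'%:~R * b%:~R + b'%:~R * (f%:R * w - a%:~R))).
    rewrite !pmulrn; ring.
  by rewrite e1 hw2 !subrr mulr0 addr0.
have [k1 k2] := lin_indep key.
have eb' : b' = f%:Z * s - a.
  have : f%:Z * (f%:Z * s - a - b') = 0 by rewrite -k2; ring.
  by move/eqP; rewrite mulf_eq0 (negPf fnz) /= subr_eq0 => /eqP ->.
exists a, b, (- a'); split => //.
  by move: k1; rewrite eb'; lia.
move=> p pp hb hB hc.
have pnz : p%:Z != 0 by rewrite eqz_nat -lt0n prime_gt0.
set B := 2 * a - f%:Z * s in hB.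
have bK := divzK hb; have BK := divzK hB; have cK := divzK hc.
set bp := (b %/ p%:Z)%Z in bK; set Bp := (B %/ p%:Z)%Z in BK; set cp := ((- a') %/ p%:Z)%Z in cK.
have pnzC : (p%:R : algC) != 0 by rewrite pnatr_eq0 -lt0n prime_gt0.
have et2 : b%:~R * t ^+ 2 = - B%:~R * t + a'%:~R :> algC.
  apply: (mulfI (_ : b%:~R != 0 :> algC)); first by rewrite intr_eq0.
  have -> : b%:~R * (b%:~R * t ^+ 2) = (b%:~R * t) ^+ 2 :> algC by ring.
  have -> : b%:~R * (- B%:~R * t + a'%:~R) = - B%:~R * (b%:~R * t) + (b * a')%:~R :> algC.
    by rewrite rmorphM; ring.
  have -> : b * a' = - (a ^+ 2 - a * f%:Z * s - f%:Z ^+ 2 * n0).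
    by move: k1; rewrite eb'; lia.
  rewrite eb /B; apply/eqP; rewrite -subr_eq0; apply/eqP.
  transitivity ((f%:R : algC) ^+ 2 * (w ^+ 2 - (s%:~R * w + n0%:~R))); first ring.
  by rewrite hw2 subrr mulr0.
have hE : isEnd t (bp%:~R * t).
  split; first by exists 0, bp; rewrite add0r.
  exists (- cp), (- Bp).
  apply: (mulfI pnzC).
  have -> : p%:R * (bp%:~R * t * t) = (bp * p%:Z)%:~R * t ^+ 2 :> algC by rewrite rmorphM /=; ring.
  rewrite bK et2.
  have -> : (a'%:~R : algC) = - (cp * p%:Z)%:~R by rewrite cK rmorphN opprK.
  by rewrite -BK !rmorphM /= !rmorphN /=; ring.
have [x [y exy]] := (proj1 (hEnd _)) hE.
have : ((- a - p%:Z * x)%:~R + (f%:Z - p%:Z * y * f%:Z)%:~R * w : algC) = 0.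
  have e2 : (bp * p%:Z)%:~R * t = p%:R * (x%:~R + y%:~R * f%:R * w) :> algC.
    by rewrite -exy rmorphM /=; ring.
  rewrite bK eb in e2.
  rewrite !rmorphB !rmorphM /= !rmorphN /=.
  by apply/eqP; rewrite -subr_eq0 -[X in X - _]addr0 -(subrr (f%:~R * w - a%:~R)) {1}e2; apply/eqP; ring.
case/lin_indep => _ e3.
have : f%:Z * (1 - p%:Z * y) = 0 by rewrite -e3; ring.
move/eqP; rewrite mulf_eq0 (negPf fnz) /= subr_eq0 => /eqP e4.
have : (p%:Z %| p%:Z * y)%Z by apply: dvdz_mulr.
by rewrite -e4 dvdz1 /= => /eqP p1; move: pp; rewrite p1.
Qed.
End Omega.
Lemma ImZ (k : int) (z : algC) : 'Im (k%:~R * z) = k%:~R * 'Im z.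
Proof. exact: (ImMl (realz _ k)). Qed.
Lemma ImZr (k : int) : 'Im (k%:~R : algC) = 0.
Proof. by apply/Creal_ImP; apply: realz. Qed.

Lemma hform_conj (M : 'M[algC]_2) x y : Defs.hermitian M -> hform M y x = (hform M x y)^*.
Proof.
move=> hM; rewrite /hform !rmorphD !rmorphM /= !conjCK.
rewrite -(hM 0 0) -(hM 0 1) -(hM 1 0) -(hM 1 1); ring.
Qed.
Lemma Im_hform_anti (M : 'M[algC]_2) x y : Defs.hermitian M ->
  'Im (hform M y x) = - 'Im (hform M x y).
Proof. by move=> hM; rewrite hform_conj // Im_conj. Qed.

Lemma ord4 (i : 'I_4) : [\/ i = o0, i = o1, i = o2 | i = o3].
Proof.
case: i => [[|[|[|[|k]]]] Hi] //.
- by constructor 1; apply/val_inj; rewrite /o0 /= inordK.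
- by constructor 2; apply/val_inj; rewrite /o1 /= inordK.
- by constructor 3; apply/val_inj; rewrite /o2 /= inordK.
- by constructor 4; apply/val_inj; rewrite /o3 /= inordK.
Qed.
Lemma ord2 (i : 'I_2) : i = 0 \/ i = 1.
Proof. by case: i => [[|[|k]] Hi] //; [left|right]; apply/val_inj. Qed.

Lemma lv0 t1 t2 : latvec t1 t2 o0 = (1, 0). Proof. by rewrite /latvec /o0 /= inordK. Qed.
Lemma lv1 t1 t2 : latvec t1 t2 o1 = (t1, 0). Proof. by rewrite /latvec /o1 /= inordK. Qed.
Lemma lv2 t1 t2 : latvec t1 t2 o2 = (0, 1). Proof. by rewrite /latvec /o2 /= inordK. Qed.
Lemma lv3 t1 t2 : latvec t1 t2 o3 = (0, t2). Proof. by rewrite /latvec /o3 /= inordK. Qed.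

Definition mkv (a01 a02 a03 a12 a13 a23 : int) (i j : nat) : int :=
  match i, j with
  | 0, 1 => a01 | 0, 2 => a02 | 0, 3 => a03 | 1, 2 => a12 | 1, 3 => a13 | 2, 3 => a23
  | 1, 0 => - a01 | 2, 0 => - a02 | 3, 0 => - a03 | 2, 1 => - a12 | 3, 1 => - a13
  | 3, 2 => - a23 | _, _ => 0 end.
Definition mk a01 a02 a03 a12 a13 a23 : 'M[int]_4 :=
  \matrix_(i, j) mkv a01 a02 a03 a12 a13 a23 i j.

Lemma mk01 a01 a02 a03 a12 a13 a23 : mk a01 a02 a03 a12 a13 a23 o0 o1 = a01.
Proof. by rewrite /mk !mxE /o0 /o1 !inordK. Qed.
Lemma mk02 a01 a02 a03 a12 a13 a23 : mk a01 a02 a03 a12 a13 a23 o0 o2 = a02.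
Proof. by rewrite /mk !mxE /o0 /o2 !inordK. Qed.
Lemma mk03 a01 a02 a03 a12 a13 a23 : mk a01 a02 a03 a12 a13 a23 o0 o3 = a03.
Proof. by rewrite /mk !mxE /o0 /o3 !inordK. Qed.
Lemma mk12 a01 a02 a03 a12 a13 a23 : mk a01 a02 a03 a12 a13 a23 o1 o2 = a12.
Proof. by rewrite /mk !mxE /o1 /o2 !inordK. Qed.
Lemma mk13 a01 a02 a03 a12 a13 a23 : mk a01 a02 a03 a12 a13 a23 o1 o3 = a13.
Proof. by rewrite /mk !mxE /o1 /o3 !inordK. Qed.
Lemma mk23 a01 a02 a03 a12 a13 a23 : mk a01 a02 a03 a12 a13 a23 o2 o3 = a23.
Proof. by rewrite /mk !mxE /o2 /o3 !inordK. Qed.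
Lemma mk_anti a01 a02 a03 a12 a13 a23 i j :
  mk a01 a02 a03 a12 a13 a23 j i = - mk a01 a02 a03 a12 a13 a23 i j.
Proof.
rewrite /mk !mxE.
case: i j => [[|[|[|[|i]]]] Hi] [[|[|[|[|j]]]] Hj] //=; rewrite ?opprK ?oppr0 //.
Qed.
Lemma intersect_mk a01 a02 a03 a12 a13 a23 b01 b02 b03 b12 b13 b23 :
  intersect (mk a01 a02 a03 a12 a13 a23) (mk b01 b02 b03 b12 b13 b23) =
  a01 * b23 + b01 * a23 - a02 * b13 - b02 * a13 + a03 * b12 + b03 * a12.
Proof.
by rewrite /intersect !mk01 !mk02 !mk03 !mk12 !mk13 !mk23.
Qed.

Lemma sum4 (V : nmodType) (F : 'I_4 -> V) :
  \sum_(i < 4) F i = F o0 + F o1 + F o2 + F o3.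
Proof.
rewrite !big_ord_recl big_ord0 addr0 !addrA.
by congr (F _ + F _ + F _ + F _); apply/val_inj; rewrite /= inordK.
Qed.

Definition blk (R : nzRingType) (x y y' z : R) (i j : nat) : R :=
  match i, j with
  | 0, 1 => 1 | 1, 0 => 1 | 2, 2 => x | 2, 3 => y | 3, 2 => y' | 3, 3 => z | _, _ => 0 end.
Lemma det4_blk (R : comNzRingType) (x y y' z : R) :
  \det (\matrix_(i < 4, j < 4) blk x y y' z i j) = - (x * z - y * y').
Proof.
rewrite (expand_det_row _ ord0) !big_ord_recl big_ord0 /cofactor !mxE /=.
rewrite !(expand_det_row _ ord0) !big_ord_recl !big_ord0 /cofactor !mxE /=.
rewrite !(expand_det_row _ ord0) !big_ord_recl !big_ord0 /cofactor !mxE /=.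
rewrite !(expand_det_row _ ord0) !big_ord_recl !big_ord0 /cofactor !mxE /=.
rewrite !det_mx00 /bump /=. ring.
Qed.
Section Main.
Variables (t1 t2 w : algC) (s n0 a1 b1 c1 a2 b2 c2 : int) (f1 f2 g f1' f2' : nat).
Hypothesis hw2 : w ^+ 2 = s%:~R * w + n0%:~R.
Hypothesis hwc : w^* = s%:~R - w.
Hypothesis hb1 : b1%:~R * t1 = f1%:R * w - a1%:~R.
Hypothesis hb2 : b2%:~R * t2 = f2%:R * w - a2%:~R.
Hypothesis hb1nz : b1 != 0.
Hypothesis hb2nz : b2 != 0.
Hypothesis hbc1 : b1 * c1 = a1 ^+ 2 - a1 * f1%:Z * s - f1%:Z ^+ 2 * n0.
Hypothesis hbc2 : b2 * c2 = a2 ^+ 2 - a2 * f2%:Z * s - f2%:Z ^+ 2 * n0.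
Hypothesis hprim1 : forall p : nat, prime p -> (p%:Z %| b1)%Z ->
  (p%:Z %| 2 * a1 - f1%:Z * s)%Z -> (p%:Z %| c1)%Z -> False.
Hypothesis hprim2 : forall p : nat, prime p -> (p%:Z %| b2)%Z ->
  (p%:Z %| 2 * a2 - f2%:Z * s)%Z -> (p%:Z %| c2)%Z -> False.
Hypothesis hf1 : f1 = (f1' * g)%N.
Hypothesis hf2 : f2 = (f2' * g)%N.
Hypothesis hcop : coprime f1' f2'.
Hypothesis hf2pos : (0 < f2')%N.
Hypothesis hI1 : 'Im t1 != 0.
Hypothesis hI2 : 'Im t2 != 0.

Local Notation m := (f2'%:Z * b1).
Local Notation R' := (f1'%:Z * a2 - f2'%:Z * a1).
Local Notation E' := (f1'%:Z * f2%:Z * s - f1'%:Z * a2 - f2'%:Z * a1).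

Lemma m_nz : m != 0.
Proof. by rewrite mulf_eq0 negb_or hb1nz andbT eqz_nat -lt0n. Qed.
Lemma m_nzC : (m%:~R : algC) != 0.
Proof. by rewrite intr_eq0 m_nz. Qed.

Lemma alpha_eq : m%:~R * t1 = R'%:~R + (f1'%:Z * b2)%:~R * t2.
Proof.
rewrite (_ : m%:~R * t1 = f2'%:R * (b1%:~R * t1)); last by rewrite rmorphM /=; ring.
rewrite (_ : (f1'%:Z * b2)%:~R * t2 = f1'%:R * (b2%:~R * t2)); last by rewrite rmorphM /=; ring.
by rewrite hb1 hb2 hf1 hf2; ring.
Qed.

Lemma b2conj : b2%:~R * t2^* = f2%:R * (s%:~R - w) - a2%:~R.
Proof.
by rewrite -hwc -(rmorph_int (@Num.conj algC) b2) -rmorphM hb2 rmorphB rmorphM /= rmorph_int conjC_nat.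
Qed.

Lemma gamma_eq : b2%:~R * t2 * t2^* = c2%:~R.
Proof.
apply: (mulfI (_ : b2%:~R != 0 :> algC)); first by rewrite intr_eq0.
rewrite (_ : b2%:~R * (b2%:~R * t2 * t2^*) = (b2%:~R * t2) * (b2%:~R * t2^*)); last ring.
rewrite hb2 b2conj -rmorphM hbc2.
apply/eqP; rewrite -subr_eq0; apply/eqP.
transitivity (- (f2%:R : algC) ^+ 2 * (w ^+ 2 - (s%:~R * w + n0%:~R))); first ring.
by rewrite hw2 subrr mulr0.
Qed.

Lemma beta_eq : b2%:~R * t2 = (f2%:Z * s - 2 * a2)%:~R - b2%:~R * t2^*.
Proof. by rewrite b2conj hb2; ring. Qed.

Lemma REL1 h : m%:~R * 'Im (t1 * h) = E'%:~R * 'Im h - (f1'%:Z * b2)%:~R * 'Im (h * t2^*).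
Proof.
rewrite -!ImZ -raddfB /=; congr ('Im _).
rewrite mulrA alpha_eq.
rewrite (_ : (R'%:~R + (f1'%:Z * b2)%:~R * t2) * h = R'%:~R * h + f1'%:R * (b2%:~R * t2) * h);
  last by rewrite rmorphM /=; ring.
by rewrite beta_eq; ring.
Qed.

Lemma REL2 h : m%:~R * 'Im (t1 * h * t2^*) = R'%:~R * 'Im (h * t2^*) + (f1'%:Z * c2)%:~R * 'Im h.
Proof.
rewrite -!ImZ -raddfD /=; congr ('Im _).
rewrite !mulrA alpha_eq.
rewrite (_ : (R'%:~R + (f1'%:Z * b2)%:~R * t2) * h * t2^* = R'%:~R * (h * t2^*) + f1'%:R * (b2%:~R * t2 * t2^*) * h);
  last by rewrite rmorphM /=; ring.
by rewrite gamma_eq; ring.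
Qed.
Definition good (A : 'M[int]_4) :=
  [/\ forall i j, A j i = - A i j,
      m * A o1 o2 = E' * A o0 o2 - (f1'%:Z * b2) * A o0 o3 &
      m * A o1 o3 = R' * A o0 o3 + (f1'%:Z * c2) * A o0 o2].

Lemma NS_good A : inNS t1 t2 A -> good A.
Proof.
case=> M [hM hA].
have eA i j : (A i j)%:~R = 'Im (hform M (latvec t1 t2 i) (latvec t1 t2 j)) by rewrite hA.
split.
- move=> i j; apply/eqP; rewrite -(eqr_int algC) eA Im_hform_anti // -eA rmorphN //.
- apply/eqP; rewrite -(eqr_int algC) !rmorphB !rmorphM /= !eA !lv0 !lv1 !lv2 !lv3.
  rewrite /hform /= !conjC0 !conjC1 !mulr0 !mul0r !mulr1 !addr0 !add0r !mul1r.
  apply/eqP; transitivity (m%:~R * 'Im (t1 * M 0 1)); first ring.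
  rewrite REL1; ring.
- apply/eqP; rewrite -(eqr_int algC) !rmorphD !rmorphM /= !eA !lv0 !lv1 !lv2 !lv3.
  rewrite /hform /= !conjC0 !conjC1 !mulr0 !mul0r !mulr1 !addr0 !add0r !mul1r.
  apply/eqP; transitivity (m%:~R * 'Im (t1 * M 0 1 * t2^*)); first ring.
  rewrite REL2; ring.
Qed.

Lemma diag0 (A : 'M[int]_4) : (forall i j, A j i = - A i j) -> forall i, A i i = 0.
Proof. by move=> h i; have := h i i; lia. Qed.

Lemma good_inj A B : good A -> good B -> A o0 o1 = B o0 o1 -> A o2 o3 = B o2 o3 ->
  A o0 o2 = B o0 o2 -> A o0 o3 = B o0 o3 -> A = B.
Proof.
move=> [hA hA12 hA13] [hB hB12 hB13] e01 e23 e02 e03.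
have e12 : A o1 o2 = B o1 o2.
  by apply: (mulfI m_nz); rewrite hA12 hB12 e02 e03.
have e13 : A o1 o3 = B o1 o3.
  by apply: (mulfI m_nz); rewrite hA13 hB13 e02 e03.
apply/matrixP => i j.
case: (ord4 i) => ->; case: (ord4 j) => ->;
  first [ by rewrite !(diag0 hA) !(diag0 hB) | by [] | by rewrite [LHS]hA [RHS]hB; congr (- _) ].
Qed.

Lemma good_add A B : good A -> good B -> good (A + B).
Proof.
move=> [hA hA12 hA13] [hB hB12 hB13]; split.
- by move=> i j; rewrite !mxE hA hB opprD.
- by rewrite !mxE mulrDr hA12 hB12; ring.
- by rewrite !mxE mulrDr hA13 hB13; ring.
Qed.
Lemma good_scale c A : good A -> good (c *: A).
Proof.
move=> [hA hA12 hA13]; split.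
- by move=> i j; rewrite !mxE hA mulrN.
- by rewrite !mxE mulrCA hA12; ring.
- by rewrite !mxE mulrCA hA13; ring.
Qed.
Lemma good0 : good 0.
Proof. by split; rewrite ?mxE ?mulr0 ?subr0 ?addr0 // => i j; rewrite !mxE oppr0. Qed.
Lemma good_sum k (c : 'I_k -> int) (B : 'I_k -> 'M[int]_4) :
  (forall l, good (B l)) -> good (\sum_(l < k) c l *: B l).
Proof.
move=> hB; elim/big_rec: _ => [|l x _ hx]; first exact: good0.
by apply: good_add => //; apply: good_scale.
Qed.

(* the "Hom" lattice in coordinates (A02, A03) *)
Definition Hm (p q : int) : bool :=
  (m %| E' * p - (f1'%:Z * b2) * q)%Z && (m %| R' * q + (f1'%:Z * c2) * p)%Z.

Definition mkH a01 p q a23 : 'M[int]_4 :=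
  mk a01 p q ((E' * p - (f1'%:Z * b2) * q) %/ m)%Z ((R' * q + (f1'%:Z * c2) * p) %/ m)%Z a23.

Lemma mkH_good a01 p q a23 : Hm p q -> good (mkH a01 p q a23).
Proof.
case/andP => h1 h2; split; first by move=> i j; rewrite mk_anti.
- by rewrite /mkH mk12 mk02 mk03 mulrC divzK.
- by rewrite /mkH mk13 mk02 mk03 mulrC divzK.
Qed.

Lemma real_inv (x : algC) : x \is Num.real -> x^-1 \is Num.real.
Proof. by move=> hx; apply/CrealP; rewrite fmorphV /= (conj_Creal hx). Qed.

Lemma mkH_NS a01 p q a23 : Hm p q -> inNS t1 t2 (mkH a01 p q a23).
Proof.
move=> hH; have [hanti h12 h13] := mkH_good a01 a23 hH.
set A := mkH a01 p q a23 in hanti h12 h13 *.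
have A01 : A o0 o1 = a01 by rewrite /A /mkH mk01.
have A23 : A o2 o3 = a23 by rewrite /A /mkH mk23.
have A02 : A o0 o2 = p by rewrite /A /mkH mk02.
have A03 : A o0 o3 = q by rewrite /A /mkH mk03.
pose mu1 : algC := - a01%:~R / 'Im t1.
pose mu2 : algC := - a23%:~R / 'Im t2.
pose h : algC := ((- q)%:~R + p%:~R * t2) / 'Im t2.
have rI1 : ('Im t1)^-1 \is Num.real by rewrite real_inv // Creal_Im.
have rI2 : ('Im t2)^-1 \is Num.real by rewrite real_inv // Creal_Im.
have rmu1 : mu1 \is Num.real by rewrite /mu1 realM // -rmorphN realz.
have rmu2 : mu2 \is Num.real by rewrite /mu2 realM // -rmorphN realz.
pose M : 'M[algC]_2 := \matrix_(i, j) if i == 0 then (if j == 0 then mu1 else h)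
                                     else (if j == 0 then h^* else mu2).
have M00 : M 0 0 = mu1 by rewrite mxE.
have M01 : M 0 1 = h by rewrite mxE.
have M10 : M 1 0 = h^* by rewrite mxE.
have M11 : M 1 1 = mu2 by rewrite mxE.
have hM : Defs.hermitian M.
  move=> i j; case: (ord2 i) => ->; case: (ord2 j) => ->;
  rewrite ?M00 ?M01 ?M10 ?M11 ?conjCK //; by apply/esym/CrealP.
have Imh : 'Im h = p%:~R.
  rewrite /h mulrC (ImMl rI2) raddfD /= ImZr ImZ add0r mulrCA mulVf // mulr1 //.
have t2r : t2 * t2^* \is Num.real by apply/CrealP; rewrite rmorphM /= conjCK mulrC.
have Imht : 'Im (h * t2^*) = q%:~R.
  rewrite (_ : h * t2^* = ('Im t2)^-1 * ((- q)%:~R * t2^* + p%:~R * (t2 * t2^*))); last by rewrite /h; ring.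
  rewrite (ImMl rI2) raddfD /= !ImZ Im_conj (Creal_ImP _ t2r) mulr0 addr0 rmorphN mulrNN.
  by rewrite mulrCA mulVf // mulr1.
have simp := (conjC0, conjC1, mulr0, mul0r, mulr1, mul1r, addr0, add0r).
have U01 : 'Im (hform M (latvec t1 t2 o0) (latvec t1 t2 o1)) = (A o0 o1)%:~R.
  rewrite lv0 lv1 /hform /= ?simp M00 (ImMl rmu1) Im_conj A01 /mu1.
  by rewrite mulrN -mulrA mulVf // mulr1 opprK.
have U23 : 'Im (hform M (latvec t1 t2 o2) (latvec t1 t2 o3)) = (A o2 o3)%:~R.
  rewrite lv2 lv3 /hform /= ?simp M11 (ImMl rmu2) Im_conj A23 /mu2.
  by rewrite mulrN -mulrA mulVf // mulr1 opprK.
have U02 : 'Im (hform M (latvec t1 t2 o0) (latvec t1 t2 o2)) = (A o0 o2)%:~R.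
  by rewrite lv0 lv2 /hform /= ?simp M01 A02.
have U03 : 'Im (hform M (latvec t1 t2 o0) (latvec t1 t2 o3)) = (A o0 o3)%:~R.
  by rewrite lv0 lv3 /hform /= ?simp M01 A03.
have U12 : 'Im (hform M (latvec t1 t2 o1) (latvec t1 t2 o2)) = (A o1 o2)%:~R.
  rewrite lv1 lv2 /hform /= ?simp M01; apply: (mulfI m_nzC).
  by rewrite REL1 Imh Imht -A02 -A03 -!rmorphM -rmorphB h12.
have U13 : 'Im (hform M (latvec t1 t2 o1) (latvec t1 t2 o3)) = (A o1 o3)%:~R.
  rewrite lv1 lv3 /hform /= ?simp M01; apply: (mulfI m_nzC).
  by rewrite REL2 Imh Imht -A02 -A03 -!rmorphM -rmorphD h13.
have anti0 (z : algC) : z = - z -> z = 0.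
  move/eqP; rewrite -addr_eq0 -mulr2n mulrn_eq0 /= => /eqP //.
exists M; split => // i j.
case: (ord4 i) => ->; case: (ord4 j) => ->; rewrite // ?(diag0 hanti) ?rmorph0;
  try (apply: anti0; apply: Im_hform_anti; done);
  by rewrite Im_hform_anti // ?U01 ?U02 ?U03 ?U12 ?U13 ?U23 -rmorphN -hanti.
Qed.
Lemma I0 : E' * R' + (f1'%:Z * b2) * (f1'%:Z * c2) = m * (f2'%:Z * c1).
Proof.
transitivity (E' * R' + f1'%:Z ^+ 2 * (b2 * c2)); first ring.
rewrite hbc2; transitivity (f2'%:Z ^+ 2 * (b1 * c1)); last ring.
by rewrite hbc1 hf1 hf2 !PoszM; ring.
Qed.

Lemma six_prime (p : nat) : prime p -> (p%:Z %| E')%Z -> (p%:Z %| f1'%:Z * b2)%Z ->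
  (p%:Z %| f1'%:Z * c2)%Z -> (p%:Z %| R')%Z -> (p%:Z %| f2'%:Z * c1)%Z -> (p%:Z %| m)%Z -> False.
Proof.
move=> pp hE hb2' hc2' hR hc1' hm.
have np : ~ ((p%:Z %| f1'%:Z)%Z /\ (p%:Z %| f2'%:Z)%Z).
  rewrite !dvdzE /= => [[h1 h2]].
  have : (p %| gcdn f1' f2')%N by rewrite dvdn_gcd h1 h2.
  by rewrite (eqP hcop) dvdn1 => /eqP p1; move: pp; rewrite p1.
case hp2 : (p%:Z %| f2'%:Z)%Z.
- have hp1 : ~~ (p%:Z %| f1'%:Z)%Z by apply/negP => h; apply: np.
  have hb : (p%:Z %| b2)%Z by case/orP: (Euclidz pp hb2') => // h; rewrite h in hp1.
  have hc : (p%:Z %| c2)%Z by case/orP: (Euclidz pp hc2') => // h; rewrite h in hp1.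
  have ha : (p%:Z %| a2)%Z.
    have : (p%:Z %| f1'%:Z * a2)%Z.
      have -> : f1'%:Z * a2 = R' + f2'%:Z * a1 by ring.
      by apply: dvdzD' => //; apply: dvdz_mulr.
    by case/(Euclidz pp)/orP => // h; rewrite h in hp1.
  apply: (hprim2 pp hb _ hc).
  apply: dvdzB'; first by apply: dvdz_mull.
  by rewrite hf2 PoszM; apply: dvdz_mulr; apply: dvdz_mulr.
- have hb : (p%:Z %| b1)%Z by case/orP: (Euclidz pp hm) => // h; rewrite h in hp2.
  have hc : (p%:Z %| c1)%Z by case/orP: (Euclidz pp hc1') => // h; rewrite h in hp2.
  apply: (hprim1 pp hb _ hc).
  have : (p%:Z %| f2'%:Z * (2 * a1 - f1%:Z * s))%Z.
    have -> : f2'%:Z * (2 * a1 - f1%:Z * s) = - (R' + E') by rewrite hf1 hf2 !PoszM; ring.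
    by apply: dvdzN'; apply: dvdzD'.
  by case/(Euclidz pp)/orP => // h; rewrite h in hp2.
Qed.

Lemma Hm_sub x y x' y' : Hm x y -> Hm x' y' -> Hm (x - x') (y - y').
Proof.
case/andP => h1 h2 /andP [h1' h2']; apply/andP; split.
- have -> : E' * (x - x') - (f1'%:Z * b2) * (y - y') =
     (E' * x - (f1'%:Z * b2) * y) - (E' * x' - (f1'%:Z * b2) * y') by ring.
  exact: dvdzB'.
- have -> : R' * (y - y') + (f1'%:Z * c2) * (x - x') =
     (R' * y + (f1'%:Z * c2) * x) - (R' * y' + (f1'%:Z * c2) * x') by ring.
  exact: dvdzB'.
Qed.
Lemma Hm_m0 : Hm m 0.
Proof. by rewrite /Hm !mulr0 subr0 add0r mulrC dvdz_mulr // mulrC dvdz_mulr. Qed.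
Lemma Hm_0m : Hm 0 m.
Proof. by rewrite /Hm !mulr0 sub0r addr0 dvdzNr mulrC dvdz_mulr // mulrC dvdz_mulr. Qed.
Lemma Hm_00 : Hm 0 0.
Proof. by have := Hm_sub Hm_m0 Hm_m0; rewrite !subrr. Qed.

Lemma good_Hm A : good A -> Hm (A o0 o2) (A o0 o3).
Proof.
move=> [_ h12 h13]; rewrite /Hm; apply/andP; split; apply/dvdzP; [exists (A o1 o2); rewrite -h12 | exists (A o1 o3); rewrite -h13]; by rewrite mulrC.
Qed.

Definition det2 (u1 u2 v1 v2 : int) := u1 * v2 - u2 * v1.

Lemma m_dvd_det u1 u2 v1 v2 : Hm u1 u2 -> Hm v1 v2 -> (m %| det2 u1 u2 v1 v2)%Z.
Proof.
case/andP => /dvdzP [x1 e1] /dvdzP [x2 e2] /andP [/dvdzP [y1 e3] /dvdzP [y2 e4]].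
apply: (@dvd_gcd6 m _ E' (f1'%:Z * b2) (f1'%:Z * c2) R' (f2'%:Z * c1) m).
- by move=> p pp; apply: six_prime.
- apply/dvdzP; exists (x1 * v2 - y1 * u2).
  transitivity ((E' * u1 - (f1'%:Z * b2) * u2) * v2 - (E' * v1 - (f1'%:Z * b2) * v2) * u2);
    first by rewrite /det2; ring.
  by rewrite e1 e3; ring.
- apply/dvdzP; exists (x1 * v1 - y1 * u1).
  transitivity ((E' * u1 - (f1'%:Z * b2) * u2) * v1 - (E' * v1 - (f1'%:Z * b2) * v2) * u1);
    first by rewrite /det2; ring.
  by rewrite e1 e3; ring.
- apply/dvdzP; exists (x2 * v2 - y2 * u2).
  transitivity ((R' * u2 + (f1'%:Z * c2) * u1) * v2 - (R' * v2 + (f1'%:Z * c2) * v1) * u2);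
    first by rewrite /det2; ring.
  by rewrite e2 e4; ring.
- apply/dvdzP; exists (y2 * u1 - x2 * v1).
  transitivity ((R' * v2 + (f1'%:Z * c2) * v1) * u1 - (R' * u2 + (f1'%:Z * c2) * u1) * v1);
    first by rewrite /det2; ring.
  by rewrite e2 e4; ring.
- apply/dvdzP; exists (x1 * y2 - y1 * x2).
  apply: (mulfI m_nz).
  transitivity ((E' * u1 - (f1'%:Z * b2) * u2) * (R' * v2 + (f1'%:Z * c2) * v1) -
                (E' * v1 - (f1'%:Z * b2) * v2) * (R' * u2 + (f1'%:Z * c2) * u1)).
    transitivity ((E' * R' + (f1'%:Z * b2) * (f1'%:Z * c2)) * det2 u1 u2 v1 v2);
      first by rewrite I0; ring.
    by rewrite /det2; ring.
  by rewrite e1 e2 e3 e4; ring.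
- by apply: dvdz_mull.
Qed.

Lemma det2_comb u1 u2 v1 v2 x y x' y' a c a' c' :
  x = a * u1 + c * v1 -> y = a * u2 + c * v2 ->
  x' = a' * u1 + c' * v1 -> y' = a' * u2 + c' * v2 ->
  det2 x y x' y' = (a * c' - c * a') * det2 u1 u2 v1 v2.
Proof. by move=> -> -> -> ->; rewrite /det2; ring. Qed.

Lemma det_sq u1 u2 v1 v2 : Hm u1 u2 -> Hm v1 v2 ->
  (forall x y, Hm x y -> exists a c, x = a * u1 + c * v1 /\ y = a * u2 + c * v2) ->
  det2 u1 u2 v1 v2 ^+ 2 = m ^+ 2.
Proof.
move=> hu hv hsp.
set D := det2 u1 u2 v1 v2.
have dvd1 : (m %| D)%Z by apply: m_dvd_det.
have g1 : Hm R' (- (f1'%:Z * c2)).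
  apply/andP; split; last by rewrite (_ : R' * (- (f1'%:Z * c2)) + f1'%:Z * c2 * R' = 0) ?dvdz0 //; ring.
  by apply/dvdzP; exists (f2'%:Z * c1); rewrite [RHS]mulrC -I0; ring.
have g2 : Hm (f1'%:Z * b2) E'.
  apply/andP; split; first by rewrite (_ : E' * (f1'%:Z * b2) - f1'%:Z * b2 * E' = 0) ?dvdz0 //; ring.
  by apply/dvdzP; exists (f2'%:Z * c1); rewrite [RHS]mulrC -I0; ring.
have dvdg x y x' y' : Hm x y -> Hm x' y' -> (D %| det2 x y x' y')%Z.
  move=> /hsp [a [c [ex ey]]] /hsp [a' [c' [ex' ey']]].
  by rewrite (det2_comb ex ey ex' ey') dvdz_mull.
have dvd2 : (D %| m)%Z.
  apply: (@dvd_gcd6 D m E' (f1'%:Z * b2) (f1'%:Z * c2) R' (f2'%:Z * c1) m).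
  - by move=> p pp; apply: six_prime.
  - have := dvdg _ _ _ _ g2 Hm_m0.
    by rewrite (_ : det2 _ _ _ _ = - (m * E')) ?dvdzNr // /det2; ring.
  - have := dvdg _ _ _ _ g2 Hm_0m.
    by rewrite (_ : det2 _ _ _ _ = m * (f1'%:Z * b2)) // /det2; ring.
  - have := dvdg _ _ _ _ g1 Hm_m0.
    by rewrite (_ : det2 _ _ _ _ = m * (f1'%:Z * c2)) // /det2; ring.
  - have := dvdg _ _ _ _ g1 Hm_0m.
    by rewrite (_ : det2 _ _ _ _ = m * R') // /det2; ring.
  - have := dvdg _ _ _ _ g1 g2.
    by rewrite (_ : det2 _ _ _ _ = m * (f2'%:Z * c1)) // /det2 -I0; ring.
  - have := dvdg _ _ _ _ Hm_m0 Hm_0m.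
    by rewrite (_ : det2 _ _ _ _ = m * m) // /det2; ring.
have ab : `|D|%N = `|m|%N.
  by apply/eqP; rewrite eqn_dvd -!dvdzE dvd1 dvd2.
by rewrite -[LHS]real_normK ?num_real // -[RHS]real_normK ?num_real // -!abszE ab.
Qed.
Lemma mkH01 a01 p q a23 : mkH a01 p q a23 o0 o1 = a01. Proof. exact: mk01. Qed.
Lemma mkH02 a01 p q a23 : mkH a01 p q a23 o0 o2 = p. Proof. exact: mk02. Qed.
Lemma mkH03 a01 p q a23 : mkH a01 p q a23 o0 o3 = q. Proof. exact: mk03. Qed.
Lemma mkH23 a01 p q a23 : mkH a01 p q a23 o2 o3 = a23. Proof. exact: mk23. Qed.

Lemma mI p q p' q' : Hm p q -> Hm p' q' ->
  m * intersect (mkH 0 p q 0) (mkH 0 p' q' 0) =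
  - p * (R' * q' + (f1'%:Z * c2) * p') - p' * (R' * q + (f1'%:Z * c2) * p)
  + q * (E' * p' - (f1'%:Z * b2) * q') + q' * (E' * p - (f1'%:Z * b2) * q).
Proof.
move=> /andP [h1 h2] /andP [h1' h2']; rewrite /mkH intersect_mk.
have e1 := divzK h1; have e2 := divzK h2; have e3 := divzK h1'; have e4 := divzK h2'.
move: (_ %/ _)%Z e1 => k1 e1; move: (_ %/ _)%Z e2 => k2 e2.
move: (_ %/ _)%Z e3 => k3 e3; move: (_ %/ _)%Z e4 => k4 e4.
rewrite -e1 -e2 -e3 -e4; ring.
Qed.

Lemma exists_basis : exists b' : 'I_4 -> 'M[int]_4,
  NS_basis t1 t2 b' /\ \det (gram b') = f1'%:Z ^+ 2 * f2%:Z ^+ 2 * (s ^+ 2 + 4 * n0).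
Proof.
have [u1 [u2 [v1 [v2 [hu hv hsp]]]]] := hnf Hm_sub m_nz Hm_m0 Hm_0m.
have hD := det_sq hu hv hsp.
have Dnz : det2 u1 u2 v1 v2 != 0.
  apply/eqP => D0; move: hD; rewrite D0 expr0n /= => /esym/eqP.
  by rewrite expf_eq0 /= (negPf m_nz).
pose b' (i : 'I_4) := match val i with 0 => mkH 1 0 0 0 | 1 => mkH 0 0 0 1
  | 2 => mkH 0 u1 u2 0 | _ => mkH 0 v1 v2 0 end.
have b0 : b' o0 = mkH 1 0 0 0 by rewrite /b' /o0 /= inordK.
have b1' : b' o1 = mkH 0 0 0 1 by rewrite /b' /o1 /= inordK.
have b2' : b' o2 = mkH 0 u1 u2 0 by rewrite /b' /o2 /= inordK.
have b3 : b' o3 = mkH 0 v1 v2 0 by rewrite /b' /o3 /= inordK.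
have bgood i : good (b' i).
  by case: (ord4 i) => ->; rewrite ?b0 ?b1' ?b2' ?b3; apply: mkH_good; rewrite ?Hm_00.
have coord (c : 'I_4 -> int) x y : (\sum_(i < 4) c i *: b' i) x y =
    c o0 * b' o0 x y + c o1 * b' o1 x y + c o2 * b' o2 x y + c o3 * b' o3 x y.
  by rewrite summxE sum4 !mxE.
exists b'; split.
  split.
  - by move=> i; case: (ord4 i) => ->; rewrite ?b0 ?b1' ?b2' ?b3; apply: mkH_NS; rewrite ?Hm_00.
  - move=> A hA; have gA := NS_good hA.
    have [al [be [e2 e3]]] := hsp _ _ (good_Hm gA).
    pose c (i : 'I_4) := match val i with 0 => A o0 o1 | 1 => A o2 o3 | 2 => al | _ => be end.
    have c0 : c o0 = A o0 o1 by rewrite /c /o0 /= inordK.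
    have c1' : c o1 = A o2 o3 by rewrite /c /o1 /= inordK.
    have c2' : c o2 = al by rewrite /c /o2 /= inordK.
    have c3 : c o3 = be by rewrite /c /o3 /= inordK.
    exists c; apply: good_inj => //; first exact: good_sum.
    + by rewrite coord c0 c1' c2' c3 b0 b1' b2' b3 !mkH01; ring.
    + by rewrite coord c0 c1' c2' c3 b0 b1' b2' b3 !mkH23; ring.
    + by rewrite coord c0 c1' c2' c3 b0 b1' b2' b3 !mkH02 e2; ring.
    + by rewrite coord c0 c1' c2' c3 b0 b1' b2' b3 !mkH03 e3; ring.
  - move=> c hc.
    have ec x y : c o0 * b' o0 x y + c o1 * b' o1 x y + c o2 * b' o2 x y + c o3 * b' o3 x y = 0.
      by rewrite -coord hc mxE.
    have h0 := ec o0 o1; have h1 := ec o2 o3; have h2 := ec o0 o2; have h3 := ec o0 o3.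
    rewrite b0 b1' b2' b3 !mkH01 in h0; rewrite b0 b1' b2' b3 !mkH23 in h1.
    rewrite b0 b1' b2' b3 !mkH02 in h2; rewrite b0 b1' b2' b3 !mkH03 in h3.
    have z0 : c o0 = 0 by move: h0; rewrite !mulr0 !addr0 mulr1.
    have z1 : c o1 = 0 by move: h1; rewrite !mulr0 !addr0 add0r mulr1.
    have z2 : c o2 = 0.
      apply: (mulIf Dnz); rewrite mul0r.
      transitivity ((c o2 * u1 + c o3 * v1) * v2 - (c o2 * u2 + c o3 * v2) * v1); first by rewrite /det2; ring.
      move: h2 h3; rewrite !mulr0 !add0r => -> ->; ring.
    have z3 : c o3 = 0.
      apply: (mulIf Dnz); rewrite mul0r.
      transitivity ((c o2 * u2 + c o3 * v2) * u1 - (c o2 * u1 + c o3 * v1) * u2); first by rewrite /det2; ring.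
      move: h2 h3; rewrite !mulr0 !add0r => -> ->; ring.
    by move=> i; case: (ord4 i) => ->.
have eg : gram b' = \matrix_(i < 4, j < 4)
   blk (intersect (mkH 0 u1 u2 0) (mkH 0 u1 u2 0)) (intersect (mkH 0 u1 u2 0) (mkH 0 v1 v2 0))
       (intersect (mkH 0 v1 v2 0) (mkH 0 u1 u2 0)) (intersect (mkH 0 v1 v2 0) (mkH 0 v1 v2 0)) i j.
  apply/matrixP => i j; rewrite !mxE.
  case: (ord4 i) => ->; case: (ord4 j) => ->; rewrite ?b0 ?b1' ?b2' ?b3 /o0 /o1 /o2 /o3 !inordK //=;
    rewrite /mkH !intersect_mk ?mulr0 ?addr0 ?subr0 ?div0z; ring.
rewrite eg det4_blk.
have m2nz : m ^+ 2 != 0 by rewrite expf_eq0 /= m_nz.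
apply: (mulfI m2nz).
transitivity (- ((m * intersect (mkH 0 u1 u2 0) (mkH 0 u1 u2 0)) * (m * intersect (mkH 0 v1 v2 0) (mkH 0 v1 v2 0))
   - (m * intersect (mkH 0 u1 u2 0) (mkH 0 v1 v2 0)) * (m * intersect (mkH 0 v1 v2 0) (mkH 0 u1 u2 0))));
  first ring.
rewrite !mI //.
transitivity (- (f1'%:Z ^+ 2 * (4 * (b2 * c2) - (2 * a2 - f2%:Z * s) ^+ 2)) * det2 u1 u2 v1 v2 ^+ 2);
  first by rewrite /det2; ring.
by rewrite hD hbc2; ring.
Qed.
End Main.
Lemma omega_facts (d : int) : d < 0 -> exists s n0 : int,
  [/\ omega_of d ^+ 2 = s%:~R * omega_of d + n0%:~R, (omega_of d)^* = s%:~R - omega_of d,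
      s ^+ 2 + 4 * n0 != 0 & ((s ^+ 2 + 4 * n0)%:~R : algC) = - 4%:R * 'Im (omega_of d) ^+ 2].
Proof.
move=> dneg.
set r := sqrtC (d%:~R : algC).
have hr2 : r ^+ 2 = d%:~R by apply: sqrtCK.
have hrc : r^* = - r.
  have hrc2 : r^* ^+ 2 = d%:~R by rewrite -rmorphXn /= hr2 rmorph_int.
  have : (r^* - r) * (r^* + r) = 0 by rewrite -subr_sqr hrc2 hr2 subrr.
  move/eqP; rewrite mulf_eq0 => /orP [|]; last by rewrite addr_eq0 => /eqP.
  rewrite subr_eq0 => /eqP /CrealP rr.
  have : 0 <= r ^+ 2 by rewrite -realEsqr.
  by rewrite hr2 ler0z leNgt dneg.
have gen (w : algC) s n0 : w ^+ 2 = s%:~R * w + n0%:~R ->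
    w^* = s%:~R - w ->
    ((s ^+ 2 + 4 * n0)%:~R : algC) = - 4%:R * 'Im w ^+ 2.
  move=> e2 ec; rewrite ImE ec.
  transitivity (- ('i ^+ 2) * (4%:R * (s%:~R * w + n0%:~R) + (s%:~R) ^+ 2 - 4%:R * s%:~R * w) : algC).
    by rewrite sqrCi; ring.
  by rewrite -e2; field.
rewrite /omega_of; case: ifP => hd.
- exists 1, (d %/ 4)%Z.
  have hd4 : d = (d %/ 4)%Z * 4 + 1 by rewrite {1}(divz_eq d 4) (eqP hd).
  have hd4C : (d%:~R : algC) = 4%:R * (d %/ 4)%Z%:~R + 1.
    by rewrite {1}hd4 rmorphD rmorphM /= mulrC.
  have e2 : ((1 + r) / 2%:R) ^+ 2 = 1%:~R * ((1 + r) / 2%:R) + (d %/ 4)%Z%:~R :> algC.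
    apply/eqP; rewrite -subr_eq0; apply/eqP.
    transitivity ((r ^+ 2 - d%:~R) / 4%:R : algC); first by rewrite hd4C; field.
    by rewrite hr2 subrr mul0r.
  have ec : ((1 + r) / 2%:R)^* = 1%:~R - (1 + r) / 2%:R :> algC.
    by rewrite rmorphM rmorphD fmorphV /= conjC1 conjC_nat hrc; field.
  split => //; last exact: gen.
  by move: hd4 dneg; lia.
- exists 0, d.
  have e2 : r ^+ 2 = 0%:~R * r + d%:~R by rewrite hr2 mul0r add0r.
  have ec : r^* = 0%:~R - r by rewrite hrc sub0r.
  split => //; last exact: gen.
  by move: dneg; lia.
Qed.
Unset Implicit Arguments.
Theorem mainTheorem12 (d : int) (f1 f2 : nat) (t1 t2 : algC)
  (hd : d < 0) (hsf : squarefree_int d)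
  (hf1 : (0 < f1)%N) (hf2 : (0 < f2)%N)
  (ht1 : 0 < 'Im t1) (ht2 : 0 < 'Im t2)
  (hEnd1 : forall alpha, isEnd t1 alpha <->
     exists a b : int, alpha = a%:~R + b%:~R * f1%:R * omega_of d)
  (hEnd2 : forall alpha, isEnd t2 alpha <->
     exists a b : int, alpha = a%:~R + b%:~R * f2%:R * omega_of d)
  (hiso : isogenous t1 t2)
  (n : nat) (b : 'I_n -> 'M[int]_4) (hb : NS_basis t1 t2 b) :
  (\det (gram b))%:~R = - 4 * ((lcmn f1 f2)%:R) ^+ 2 * ('Im (omega_of d)) ^+ 2 :> algC.
Proof.
have [s [n0 [hw2 hwc hdK hIm]]] := omega_facts hd.
have [a1 [b1 [c1 [hb1 hb1nz hbc1 hprim1]]]] := curve_data hw2 hwc hdK hf1 hEnd1.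
have [a2 [b2 [c2 [hb2 hb2nz hbc2 hprim2]]]] := curve_data hw2 hwc hdK hf2 hEnd2.
set g := gcdn f1 f2.
have gpos : (0 < g)%N by rewrite gcdn_gt0 hf1.
have ef1 : f1 = (f1 %/ g * g)%N by rewrite divnK // dvdn_gcdl.
have ef2 : f2 = (f2 %/ g * g)%N by rewrite divnK // dvdn_gcdr.
have hcop : coprime (f1 %/ g) (f2 %/ g).
  have : (gcdn (f1 %/ g) (f2 %/ g) * g = 1 * g)%N by rewrite muln_gcdl -ef1 -ef2 mul1n.
  by move/eqP; rewrite eqn_pmul2r.
have hf2pos : (0 < f2 %/ g)%N.
  by move: hf2; rewrite {1}ef2 muln_gt0 => /andP [].
have hI1 : 'Im t1 != 0 by rewrite gt_eqF.
have hI2 : 'Im t2 != 0 by rewrite gt_eqF.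
have [b' [hb' hdet]] := exists_basis hw2 hwc hb1 hb2 hb1nz hb2nz hbc1 hbc2 hprim1 hprim2
   ef1 ef2 hcop hf2pos hI1 hI2.
have n4 := basis_size hb hb'; subst n.
rewrite (gram_change hb hb') hdet.
have hl : lcmn f1 f2 = (f1 %/ g * f2)%N.
  by rewrite /lcmn -/g {1}ef1 mulnAC mulnK.
rewrite hl.
rewrite (_ : (f1 %/ g)%:Z ^+ 2 * f2%:Z ^+ 2 * (s ^+ 2 + 4 * n0) =
    ((f1 %/ g * f2)%N%:Z) ^+ 2 * (s ^+ 2 + 4 * n0)); last by rewrite PoszM; ring.
rewrite rmorphM /= hIm rmorphXn /=.
ring.
Qed.
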